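(* Let $(G,u)$ be a unital po-group such that $G$ satisfies RIP. If the pseudo effect algebra $E=\Gamma(G,u)$ satisfies RDP$_1$, then $G$ satisfies RDP$_1$.
   Context: A po-group is a (not necessarily Abelian, additively written) group with a partial order $\le$ such that $a\le b$ implies $x+a+y\le x+b+y$; $G^+$ is its positive cone. A unital po-group $(G,u)$ is a po-group with a strong unit $u\in G^+$ (for each $g\in G$ there is $k\ge1$ with $g\le ku$). $\Gamma(G,u)=\{g\in G:0\le g\le u\}$ is a pseudo effect algebra with constants $0,u$ and partial addition: $a+b$ is defined (equal to the group sum) iff $a+b\le u$. RIP: whenever $a_i\le b_j$ for all $i,j\in\{1,2\}$, there is $c$ with $a_i\le c\le b_j$ for all $i,j$. RDP$_1$ for a po-group $G$: for all $a_1,a_2,b_1,b_2\in G^+$ with $a_1+a_2=b_1+b_2$ there are $c_{11},c_{12},c_{21},c_{22}\in G^+$ with $a_1=c_{11}+c_{12}$, $a_2=c_{21}+c_{22}$, $b_1=c_{11}+c_{21}$, $b_2=c_{12}+c_{22}$, and such that $0\le x\le c_{12}$, $0\le y\le c_{21}$ imply $x+y=y+x$. RDP$_1$ for a pseudo effect algebra $E$ is defined identically with $G^+$ replaced by $E$ and all sums required to be defined in $E$. *)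

(* Defs.v *)
From Stdlib Require Import Arith.

Record pogroup := PoGroup {
  car :> Type;
  gadd : car -> car -> car;
  gzero : car;
  gopp : car -> car;
  gle : car -> car -> Prop;
  gaddA : forall x y z, gadd x (gadd y z) = gadd (gadd x y) z;
  gadd0l : forall x, gadd gzero x = x;
  gadd0r : forall x, gadd x gzero = x;
  gaddNl : forall x, gadd (gopp x) x = gzero;
  gaddNr : forall x, gadd x (gopp x) = gzero;
  gle_refl : forall x, gle x x;
  gle_trans : forall x y z, gle x y -> gle y z -> gle x z;
  gle_antisym : forall x y, gle x y -> gle y x -> x = y;
  gle_compat : forall a b x y, gle a b -> gle (gadd x (gadd a y)) (gadd x (gadd b y))
}.

Arguments gadd {p} _ _.
Arguments gzero {p}.
Arguments gopp {p} _.
Arguments gle {p} _ _.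

Fixpoint gnat {G : pogroup} (k : nat) (u : G) : G :=
  match k with
  | O => gzero
  | S k' => gadd u (gnat k' u)
  end.

Definition strong_unit (G : pogroup) (u : G) : Prop :=
  gle gzero u /\ forall g : G, exists k : nat, 1 <= k /\ gle g (gnat k u).

Definition inGamma {G : pogroup} (u : G) (g : G) : Prop := gle gzero g /\ gle g u.

Definition RIP (G : pogroup) : Prop :=
  forall a1 a2 b1 b2 : G,
    gle a1 b1 -> gle a1 b2 -> gle a2 b1 -> gle a2 b2 ->
    exists c : G, gle a1 c /\ gle a2 c /\ gle c b1 /\ gle c b2.

Definition RDP1_group (G : pogroup) : Prop :=
  forall a1 a2 b1 b2 : G,
    gle gzero a1 -> gle gzero a2 -> gle gzero b1 -> gle gzero b2 ->
    gadd a1 a2 = gadd b1 b2 ->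
    exists c11 c12 c21 c22 : G,
      gle gzero c11 /\ gle gzero c12 /\ gle gzero c21 /\ gle gzero c22 /\
      a1 = gadd c11 c12 /\ a2 = gadd c21 c22 /\
      b1 = gadd c11 c21 /\ b2 = gadd c12 c22 /\
      (forall x y : G, gle gzero x -> gle x c12 -> gle gzero y -> gle y c21 ->
         gadd x y = gadd y x).

(* RDP_1 for the pseudo effect algebra E = Gamma(G,u), whose partial sum
   a + b is defined (and equal to the group sum) iff a + b <= u. *)
Definition RDP1_Gamma (G : pogroup) (u : G) : Prop :=
  forall a1 a2 b1 b2 : G,
    inGamma u a1 -> inGamma u a2 -> inGamma u b1 -> inGamma u b2 ->
    gle (gadd a1 a2) u -> gle (gadd b1 b2) u ->
    gadd a1 a2 = gadd b1 b2 ->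
    exists c11 c12 c21 c22 : G,
      inGamma u c11 /\ inGamma u c12 /\ inGamma u c21 /\ inGamma u c22 /\
      gle (gadd c11 c12) u /\ gle (gadd c21 c22) u /\
      gle (gadd c11 c21) u /\ gle (gadd c12 c22) u /\
      a1 = gadd c11 c12 /\ a2 = gadd c21 c22 /\
      b1 = gadd c11 c21 /\ b2 = gadd c12 c22 /\
      (forall x y : G, inGamma u x -> gle x c12 -> inGamma u y -> gle y c21 ->
         gle (gadd x y) u /\ gle (gadd y x) u /\ gadd x y = gadd y x).

(* Main.v *)
Require Import Defs.

Declare Scope pg_scope.
Local Infix "+" := gadd : pg_scope.
Local Notation "- x" := (gopp x) : pg_scope.
Local Infix "<=" := gle : pg_scope.
Local Notation "0" := gzero : pg_scope.
Local Open Scope pg_scope.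

Lemma le_addl (G : pogroup) (x y z : G) : x <= y -> z + x <= z + y.
Proof. intro H. pose proof (gle_compat G x y z 0 H) as K.
  rewrite !gadd0r in K. exact K. Qed.

Lemma le_addr (G : pogroup) (x y z : G) : x <= y -> x + z <= y + z.
Proof. intro H. pose proof (gle_compat G x y 0 z H) as K.
  rewrite !gadd0l in K. exact K. Qed.

Lemma le_pos_l (G : pogroup) (a b : G) : 0 <= a -> b <= a + b.
Proof. intro H. pose proof (le_addr G _ _ b H) as K. rewrite gadd0l in K. exact K. Qed.

Lemma le_pos_r (G : pogroup) (a b : G) : 0 <= a -> b <= b + a.
Proof. intro H. pose proof (le_addl G _ _ b H) as K. rewrite gadd0r in K. exact K. Qed.

Lemma add_pos (G : pogroup) (a b : G) : 0 <= a -> 0 <= b -> 0 <= a + b.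
Proof. intros Ha Hb. eapply gle_trans. exact Hb. apply le_pos_l; auto. Qed.

Lemma le_sub (G : pogroup) (x y : G) : x <= y -> 0 <= -x + y.
Proof. intro H. pose proof (le_addl G _ _ (-x) H) as K. rewrite gaddNl in K. exact K. Qed.

Lemma addKl (G : pogroup) (a b : G) : a + (-a + b) = b.
Proof. rewrite gaddA, gaddNr, gadd0l. reflexivity. Qed.

Lemma addNKl (G : pogroup) (a b : G) : -a + (a + b) = b.
Proof. rewrite gaddA, gaddNl, gadd0l. reflexivity. Qed.

Lemma sub_eq (G : pogroup) (a b c : G) : a + b = c -> b = -a + c.
Proof. intro H. rewrite <- H, addNKl. reflexivity. Qed.

Lemma le_tr (G : pogroup) (x y z : G) : x <= y -> y <= z -> x <= z.
Proof. apply gle_trans. Qed.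

Lemma decomp (G : pogroup) : RIP G -> forall x a b : G,
  0 <= x -> x <= a + b -> 0 <= a -> 0 <= b ->
  exists x1 x2, x = x1 + x2 /\ 0 <= x1 /\ x1 <= a /\ 0 <= x2 /\ x2 <= b.
Proof.
  intros rip x a b Hx Hxab Ha Hb.
  assert (Nb : -b <= 0).
  { pose proof (le_addl G _ _ (-b) Hb) as K. rewrite gadd0r, gaddNl in K. exact K. }
  assert (H1 : x + -b <= a).
  { pose proof (le_addr G _ _ (-b) Hxab) as K.
    rewrite <- gaddA, gaddNr, gadd0r in K. exact K. }
  assert (H2 : x + -b <= x).
  { pose proof (le_addl G _ _ x Nb) as K. rewrite gadd0r in K. exact K. }
  destruct (rip 0 (x + -b) a x Ha Hx H1 H2) as [c [Hc0 [Hc1 [Hca Hcx]]]].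
  exists c, (-c + x). split; [rewrite addKl; reflexivity|].
  repeat split; auto.
  - apply le_sub; auto.
  - pose proof (le_addr G _ _ b Hc1) as K.
    rewrite <- gaddA, gaddNl, gadd0r in K.
    pose proof (le_addl G _ _ (-c) K) as K2. rewrite addNKl in K2. exact K2.
Qed.

Definition comm (G : pogroup) (A B : G) : Prop :=
  forall x y : G, 0 <= x -> x <= A -> 0 <= y -> y <= B -> x + y = y + x.

Definition Q (G : pogroup) (a1 a2 b1 b2 : G) : Prop :=
    exists c11 c12 c21 c22 : G,
      gle gzero c11 /\ gle gzero c12 /\ gle gzero c21 /\ gle gzero c22 /\
      a1 = gadd c11 c12 /\ a2 = gadd c21 c22 /\
      b1 = gadd c11 c21 /\ b2 = gadd c12 c22 /\
      (forall x y : G, gle gzero x -> gle x c12 -> gle gzero y -> gle y c21 ->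
         gadd x y = gadd y x).

Lemma Q_transpose (G : pogroup) (a1 a2 b1 b2 : G) : Q G a1 a2 b1 b2 -> Q G b1 b2 a1 a2.
Proof.
  intros [c11 [c12 [c21 [c22 [H1 [H2 [H3 [H4 [E1 [E2 [E3 [E4 C]]]]]]]]]]]].
  exists c11, c21, c12, c22. repeat split; auto.
  intros x y ? ? ? ?. symmetry. apply C; auto.
Qed.

Lemma Q_base (G : pogroup) (u : G) : RIP G -> RDP1_Gamma G u ->
  forall p r p' r' : G, 0 <= p -> 0 <= r -> 0 <= p' -> 0 <= r' ->
  p <= u -> p' <= u -> p + r = p' + r' -> Q G p r p' r'.
Proof.
  intros rip rdp p r p' r' Hp Hr Hp' Hr' Hpu Hp'u E.
  set (s := p + r).
  assert (Hps : p <= s) by (apply le_pos_r; auto).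
  assert (Hp's : p' <= s) by (unfold s; rewrite E; apply le_pos_r; auto).
  destruct (rip p p' s u Hps Hpu Hp's Hp'u) as [m [Hpm [Hp'm [Hms Hmu]]]].
  set (r1 := -p + m). set (r1' := -p' + m). set (n := -m + s).
  assert (Hr1 : 0 <= r1) by (apply le_sub; auto).
  assert (Hr1' : 0 <= r1') by (apply le_sub; auto).
  assert (Hn : 0 <= n) by (apply le_sub; auto).
  assert (Em : p + r1 = m) by (apply addKl).
  assert (Em' : p' + r1' = m) by (apply addKl).
  assert (Er : r = r1 + n).
  { unfold r1, n. rewrite <- gaddA, addKl. apply sub_eq. reflexivity. }
  assert (Er' : r' = r1' + n).
  { unfold r1', n. rewrite <- gaddA, addKl. apply sub_eq. unfold s. symmetry. exact E. }
  assert (Hm0 : 0 <= m) by (apply (le_tr G _ p); auto).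
  assert (G1 : r1 <= u).
  { eapply le_tr; [apply (le_pos_l G p r1 Hp)|]. rewrite Em; auto. }
  assert (G1' : r1' <= u).
  { eapply le_tr; [apply (le_pos_l G p' r1' Hp')|]. rewrite Em'; auto. }
  destruct (rdp p r1 p' r1' (conj Hp Hpu) (conj Hr1 G1) (conj Hp' Hp'u) (conj Hr1' G1'))
    as [g11 [g12 [g21 [g22 [K11 [K12 [K21 [K22 [_ [_ [_ [_ [F1 [F2 [F3 [F4 C]]]]]]]]]]]]]]]].
  { rewrite Em; auto. } { rewrite Em'; auto. } { rewrite Em, Em'; reflexivity. }
  exists g11, g12, g21, (g22 + n).
  destruct K11, K12, K21, K22.
  repeat split; auto.
  - apply add_pos; auto.
  - rewrite Er, F2, gaddA. reflexivity.
  - rewrite Er', F4, gaddA. reflexivity.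
  - intros x y Hx Hxc Hy Hyc.
    apply (C x y); try split; auto; eapply le_tr; eauto.
Qed.

Lemma le_pos_l' (G : pogroup) (a b c : G) : 0 <= a -> c = a + b -> b <= c.
Proof. intros H ->. apply le_pos_l; auto. Qed.

Lemma Q_split (G : pogroup) : RIP G -> forall (P : G -> Prop) (p q a2 b1 b2 : G),
  0 <= p -> 0 <= q -> 0 <= a2 -> 
  Q G p (q + a2) b1 b2 ->
  (forall d21 d22, 0 <= d21 -> d21 <= b1 -> 0 <= d22 -> q + a2 = d21 + d22 ->
     Q G q a2 d21 d22) ->
  Q G (p + q) a2 b1 b2.
Proof.
  intros rip P p q a2 b1 b2 Hp Hq Ha2 Q1 IH.
  destruct Q1 as [d11 [d12 [d21 [d22 [D11 [D12 [D21 [D22 [E1 [E2 [E3 [E4 Cd]]]]]]]]]]]].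
  destruct (IH d21 d22 D21 (le_pos_l' G _ _ _ D11 E3) D22 E2)
    as [e11 [e12 [e21 [e22 [F11 [F12 [F21 [F22 [G1 [G2 [G3 [G4 Ce]]]]]]]]]]]].
  assert (He11 : e11 <= d21) by (rewrite G3; apply le_pos_r; auto).
  assert (He21 : e21 <= d21) by (apply (le_pos_l' G e11); auto).
  exists (d11 + e11), (d12 + e12), e21, e22.
  repeat split; auto.
  - apply add_pos; auto.
  - apply add_pos; auto.
  - rewrite E1, G1, <- !gaddA. f_equal. rewrite !gaddA. f_equal.
    apply Cd; auto. apply gle_refl.
  - rewrite E3, G3, gaddA. reflexivity.
  - rewrite E4, G4, gaddA. reflexivity.
  - intros x y Hx Hxc Hy Hyc.
    destruct (decomp G rip x d12 e12 Hx Hxc D12 F12) as [x1 [x2 [-> [X1 [X1' [X2 X2']]]]]].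
    rewrite <- gaddA, (Ce x2 y), gaddA, (Cd x1 y), <- gaddA; auto.
    eapply le_tr; eauto.
Qed.

Lemma gnat_pos (G : pogroup) (u : G) (k : nat) : 0 <= u -> 0 <= gnat k u.
Proof. intro H. induction k; simpl. apply gle_refl. apply add_pos; auto. Qed.

Lemma Q_induct (G : pogroup) (u : G) : strong_unit G u -> RIP G ->
  forall P : G -> Prop,
  (forall b d : G, P b -> 0 <= d -> d <= b -> P d) ->
  (forall a1 a2 b1 b2 : G, 0 <= a1 -> 0 <= a2 -> 0 <= b1 -> 0 <= b2 ->
      a1 <= u -> P b1 -> a1 + a2 = b1 + b2 -> Q G a1 a2 b1 b2) ->
  (forall a1 a2 b1 b2 : G, 0 <= a1 -> 0 <= a2 -> 0 <= b1 -> 0 <= b2 ->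
      P b1 -> a1 + a2 = b1 + b2 -> Q G a1 a2 b1 b2).
Proof.
  intros [Hu su] rip P Pdown Base a1 a2 b1 b2 Ha1 Ha2 Hb1 Hb2 Pb1 E.
  destruct (su a1) as [k [_ Hk]].
  revert a1 a2 b1 b2 Ha1 Ha2 Hb1 Hb2 Pb1 E Hk.
  induction k as [|k IH]; intros a1 a2 b1 b2 Ha1 Ha2 Hb1 Hb2 Pb1 E Hk; simpl in Hk.
  - assert (a1 = 0) by (apply gle_antisym; auto). subst.
    apply Base; auto.
  - destruct (decomp G rip a1 u (gnat k u) Ha1 Hk Hu (gnat_pos G u k Hu))
      as [p [q [-> [Hp [Hpu [Hq Hqk]]]]]].
    apply (Q_split G rip P); auto.
    + apply Base; auto. apply add_pos; auto. rewrite <- E, gaddA. reflexivity.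
    + intros d21 d22 D21 Dle D22 Ed. apply IH; eauto.
Qed.

Theorem theorem3p6 (G : pogroup) (u : G) :
  strong_unit G u -> RIP G -> RDP1_Gamma G u -> RDP1_group G.
Proof.
  intros su rip rdp.
  assert (S1 : forall a1 a2 b1 b2 : G, 0 <= a1 -> 0 <= a2 -> 0 <= b1 -> 0 <= b2 ->
      a1 <= u -> b1 <= u -> a1 + a2 = b1 + b2 -> Q G a1 a2 b1 b2).
  { intros. apply (Q_base G u rip rdp); auto. }
  assert (S2 : forall a1 a2 b1 b2 : G, 0 <= a1 -> 0 <= a2 -> 0 <= b1 -> 0 <= b2 ->
      b1 <= u -> a1 + a2 = b1 + b2 -> Q G a1 a2 b1 b2).
  { apply (Q_induct G u su rip (fun b => b <= u)).
    - intros b d Hb _ Hd. eapply le_tr; eauto.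
    - intros. apply S1; auto. }
  assert (S3 : forall a1 a2 b1 b2 : G, 0 <= a1 -> 0 <= a2 -> 0 <= b1 -> 0 <= b2 ->
      True -> a1 + a2 = b1 + b2 -> Q G a1 a2 b1 b2).
  { apply (Q_induct G u su rip (fun _ => True)).
    - auto.
    - intros. apply Q_transpose. apply S2; auto. }
  intros a1 a2 b1 b2 H1 H2 H3 H4 E. exact (S3 a1 a2 b1 b2 H1 H2 H3 H4 I E).
Qed.
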